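(* Let $d_1,d_2\ge 2$ and let $\rho$ be a density matrix on $\mathbb{C}^{d_1}\otimes\mathbb{C}^{d_2}$. Let $\mathcal{P}=\{P_j\}_{j=1}^{d_1^2}$ be a general SIC-POVM on $\mathbb{C}^{d_1}$ with parameter $a_1$ and $\mathcal{Q}=\{Q_k\}_{k=1}^{d_2^2}$ a general SIC-POVM on $\mathbb{C}^{d_2}$ with parameter $a_2$. Let $d=\min\{d_1^2,d_2^2\}$ and define $$J(\rho)=\max_{\sigma,\tau}\sum_{j=1}^{d}\mathrm{Tr}\big[(P_{\sigma(j)}\otimes Q_{\tau(j)})\rho\big],$$ where the maximum runs over all injective maps $\sigma:\{1,\dots,d\}\to\{1,\dots,d_1^2\}$ and $\tau:\{1,\dots,d\}\to\{1,\dots,d_2^2\}$. If $\rho$ is separable, then $$J(\rho)\le \sqrt{\frac{a_1d_1^2+1}{d_1(d_1+1)}}\,\sqrt{\frac{a_2d_2^2+1}{d_2(d_2+1)}}.$$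
   Context: A general SIC-POVM on $\mathbb{C}^{n}$ with parameter $a$ is a set of $n^2$ positive semidefinite operators $\{P_\alpha\}_{\alpha=1}^{n^2}$ on $\mathbb{C}^{n}$ such that $\sum_{\alpha=1}^{n^2}P_\alpha=I$, $\mathrm{Tr}(P_\alpha^2)=a$ for all $\alpha$, and $\mathrm{Tr}(P_\alpha P_\beta)=\frac{1-na}{n(n^2-1)}$ for all $\alpha\neq\beta$; here $\frac{1}{n^3}<a\le\frac{1}{n^2}$. A density matrix on $\mathbb{C}^{d_1}\otimes\mathbb{C}^{d_2}$ is separable if it is a convex combination of product states $\rho_A\otimes\rho_B$. *)

(* Defs.v *)
From HB Require Import structures.
From mathcomp Require Import all_boot all_order all_algebra.
From mathcomp Require Import algC.
Set Implicit Arguments. Unset Strict Implicit. Unset Printing Implicit Defensive.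
Import Order.TTheory GRing.Theory Num.Theory.
Local Open Scope ring_scope.

Definition adjmx m n (A : 'M[algC]_(m, n)) : 'M[algC]_(n, m) := map_mx (fun x : algC => x^*) A^T.

Definition psd n (A : 'M[algC]_n) : Prop :=
  adjmx A = A /\ forall v : 'cV[algC]_n, 0 <= (adjmx v *m A *m v) 0 0.

Definition density n (A : 'M[algC]_n) : Prop := psd A /\ \tr A = 1.

(* Kronecker (tensor) product A (x) B, with index (i,k) of C^m (x) C^n
   encoded as mxvec_index i k : 'I_(m*n). *)
Definition kron m n (A : 'M[algC]_m) (B : 'M[algC]_n) : 'M[algC]_(m * n) :=
  \sum_(i < m) \sum_(j < m) \sum_(k < n) \sum_(l < n)
     (A i j * B k l) *: delta_mx (mxvec_index i k) (mxvec_index j l).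

Definition separable d1 d2 (rho : 'M[algC]_(d1 * d2)) : Prop :=
  exists (N : nat) (p : 'I_N -> algC) (A : 'I_N -> 'M[algC]_d1)
         (B : 'I_N -> 'M[algC]_d2),
    (forall i, 0 <= p i) /\ \sum_(i < N) p i = 1 /\
    (forall i, density (A i)) /\ (forall i, density (B i)) /\
    rho = \sum_(i < N) p i *: kron (A i) (B i).

Definition gen_SIC_POVM n (a : algC) (P : 'I_(n ^ 2) -> 'M[algC]_n) : Prop :=
  (n%:R ^+ 3)^-1 < a /\ a <= (n%:R ^+ 2)^-1 /\
      (forall al, psd (P al)) /\
      \sum_(al < n ^ 2) P al = 1%:M /\
      (forall al, \tr (P al *m P al) = a) /\
      (forall al be, al != be ->
         \tr (P al *m P be) = (1 - n%:R * a) / (n%:R * (n%:R ^+ 2 - 1))).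

(* Main.v *)
Require Import Defs.
From HB Require Import structures.
From mathcomp Require Import all_boot all_order all_algebra.
From mathcomp Require Import algC.
From mathcomp Require Import ring.
Import Order.TTheory GRing.Theory Num.Theory.
Set Implicit Arguments. Unset Strict Implicit. Unset Printing Implicit Defensive.
Local Open Scope ring_scope.

Definition hermE n (A : 'M[algC]_n) := forall i j, A i j = (A j i)^*.

Lemma adjmx_herm n (A : 'M[algC]_n) : adjmx A = A -> hermE A.
Proof. by move=> h i j; rewrite -{1}h !mxE. Qed.

Lemma trM n (X Y : 'M[algC]_n) :
  \tr (X *m Y) = \sum_i \sum_j X i j * Y j i.
Proof. by apply: eq_bigr => i _; rewrite mxE. Qed.

Lemma tr_mul_conj n (X Y : 'M[algC]_n) : hermE X -> hermE Y ->
  (\tr (X *m Y))^* = \tr (X *m Y).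
Proof.
move=> hX hY; rewrite !trM rmorph_sum /= exchange_big /=.
apply: eq_bigr => i _; rewrite rmorph_sum; apply: eq_bigr => j _.
by rewrite rmorphM /= -hX -hY mulrC.
Qed.

Lemma tr_sq_ge0 n (X : 'M[algC]_n) : hermE X -> 0 <= \tr (X *m X).
Proof.
move=> hX; rewrite trM; apply: sumr_ge0 => i _; apply: sumr_ge0 => j _.
by rewrite [X j i]hX mul_conjC_ge0.
Qed.

Lemma real_sq_ge0 (x : algC) : x^* = x -> 0 <= x * x.
Proof. by move=> h; rewrite -{2}h mul_conjC_ge0. Qed.

Lemma mxvec_index_inj m n (i i' : 'I_m) (k k' : 'I_n) :
  (mxvec_index i k == mxvec_index i' k') = (i == i') && (k == k').
Proof.
apply/eqP/andP => [/cast_ord_inj/enum_rank_inj [-> ->] // | [/eqP-> /eqP->] //].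
Qed.

Lemma sum_delta (T : finType) (a : T) (F : T -> algC) :
  \sum_t (t == a)%:R * F t = F a.
Proof.
rewrite (bigD1 a) //= eqxx mul1r big1 ?addr0 // => t /negbTE->; by rewrite mul0r.
Qed.

Lemma kronE m n (A : 'M[algC]_m) (B : 'M[algC]_n) i j k l :
  kron A B (mxvec_index i k) (mxvec_index j l) = A i j * B k l.
Proof.
rewrite /kron summxE.
under eq_bigr => i' _.
  rewrite summxE; under eq_bigr => j' _.
    rewrite summxE; under eq_bigr => k' _.
      rewrite summxE; under eq_bigr => l' _.
        rewrite !mxE !mxvec_index_inj.
        have -> : (((i == i') && (k == k')) && ((j == j') && (l == l')))%:R
           = (i' == i)%:R * ((j' == j)%:R * ((k' == k)%:R * (l' == l)%:R)) :> algC.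
          by rewrite ![i == _]eq_sym ![j == _]eq_sym ![k == _]eq_sym ![l == _]eq_sym;
             do 4 case: eqP => _ /=; rewrite ?(mul1r, mulr1, mul0r, mulr0).
        over.
      over.
    over.
  over.
rewrite /=.
transitivity (\sum_(i' < m) (i' == i)%:R * \sum_(j' < m) (j' == j)%:R *
   \sum_(k' < n) (k' == k)%:R * \sum_(l' < n) (l' == l)%:R * (A i' j' * B k' l')).
  apply: eq_bigr => i' _; rewrite big_distrr; apply: eq_bigr => j' _ /=.
  rewrite big_distrr big_distrr; apply: eq_bigr => k' _ /=.
  rewrite !big_distrr; apply: eq_bigr => l' _ /=; ring.
rewrite sum_delta; under eq_bigr => j' _ do rewrite sum_delta.
rewrite sum_delta. exact: (sum_delta l (fun l0 => A i j * B k l0)).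
Qed.

Lemma sum_mxvec m n (F : 'I_(m * n) -> algC) :
  \sum_x F x = \sum_i \sum_k F (mxvec_index i k).
Proof.
rewrite (reindex _ (curry_mxvec_bij _ _)) /= pair_bigA /=.
by apply: eq_bigr => [[i k]].
Qed.

Lemma tr_kron m n (P A : 'M[algC]_m) (Q B : 'M[algC]_n) :
  \tr (kron P Q *m kron A B) = \tr (P *m A) * \tr (Q *m B).
Proof.
rewrite trM sum_mxvec !trM big_distrl /=.
rewrite (eq_bigr (fun i => \sum_k \sum_j \sum_l (P i j * A j i) * (Q k l * B l k))).
  by apply: eq_bigr => i _; rewrite exchange_big /= big_distrl /=;
     apply: eq_bigr => j _; rewrite big_distrr /=; apply: eq_bigr => k _;
     rewrite big_distrr.
move=> i _; apply: eq_bigr => k _; rewrite sum_mxvec; apply: eq_bigr => j _.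
apply: eq_bigr => l _; rewrite !kronE; ring.
Qed.

Lemma quadE n (A : 'M[algC]_n) (v : 'cV_n) :
  (adjmx v *m A *m v) 0 0 = \sum_k \sum_l (v k 0)^* * A k l * v l 0.
Proof.
rewrite mxE exchange_big /=; apply: eq_bigr => l _; rewrite mxE big_distrl /=.
by apply: eq_bigr => k _; rewrite !mxE.
Qed.

Definition vec2 n (i j : 'I_n) (t s : algC) : 'cV[algC]_n :=
  \col_k (t * (k == i)%:R + s * (k == j)%:R).

Lemma sum2_delta n (a b : 'I_n) (F : 'I_n -> 'I_n -> algC) :
  \sum_k \sum_l (k == a)%:R * ((l == b)%:R * F k l) = F a b.
Proof.
under eq_bigr => k _ do rewrite -big_distrr /=.
rewrite sum_delta. exact: (sum_delta b (fun l => F a l)).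
Qed.

Lemma quad2 n (A : 'M[algC]_n) i j t s :
  (adjmx (vec2 i j t s) *m A *m vec2 i j t s) 0 0 =
  t^* * t * A i i + t^* * s * A i j + s^* * t * A j i + s^* * s * A j j.
Proof.
rewrite quadE.
transitivity (\sum_k \sum_l ((k == i)%:R * ((l == i)%:R * (t^* * t * A k l))
  + (k == i)%:R * ((l == j)%:R * (t^* * s * A k l))
  + (k == j)%:R * ((l == i)%:R * (s^* * t * A k l))
  + (k == j)%:R * ((l == j)%:R * (s^* * s * A k l)))).
  apply: eq_bigr => k _; apply: eq_bigr => l _; rewrite !mxE.
  rewrite rmorphD !rmorphM /= !conjC_nat; ring.
rewrite (eq_bigr _ (fun k _ => big_split _ _ _ _ _)) big_split /=.
rewrite (eq_bigr _ (fun k _ => big_split _ _ _ _ _)) big_split /=.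
rewrite (eq_bigr _ (fun k _ => big_split _ _ _ _ _)) big_split /=.
rewrite !sum2_delta; done.
Qed.

Lemma realC_ge0 (x : algC) : 0 <= x -> x^* = x.
Proof. by move=> h; apply/eqP; rewrite -CrealE ger0_real. Qed.

Lemma psd_diag n (A : 'M[algC]_n) i : psd A -> 0 <= A i i.
Proof.
case=> _ hA; have := hA (vec2 i i 1 0); rewrite quad2.
by rewrite rmorph1 rmorph0 !(mul1r, mul0r, mulr0, mulr1, addr0).
Qed.

Lemma psd_minor n (A : 'M[algC]_n) i j : psd A ->
  A i j * (A i j)^* <= A i i * A j j.
Proof.
move=> hpsd; have hA := hpsd; case: hA => /adjmx_herm hH hq.
have d0i := psd_diag i hpsd; have d0j := psd_diag j hpsd.
set b := A i j * (A i j)^*.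
have b0 : 0 <= b by apply: mul_conjC_ge0.
have f t : t^* = t -> 0 <= t * t * A i i - 2 * t * b + b * A j j.
  move=> ht; have := hq (vec2 i j t (- A j i)); rewrite quad2.
  rewrite ht rmorphN /= [A j i]hH conjCK /b; congr (0 <= _); ring.
have := d0i; rewrite le_eqVlt => /orP [/eqP d0 | dpos].
  have := f (A j j + 1); rewrite rmorphD /= rmorph1 (realC_ge0 d0j) => /(_ erefl).
  rewrite -d0 mulr0 add0r.
  have -> : - (2 * (A j j + 1) * b) + b * A j j = - (b * (A j j + 2)) by ring.
  rewrite oppr_ge0 => hle.
  have h2 : 0 < A j j + 2 by apply: ltr_wpDl.
  have : b * (A j j + 2) = 0 by apply/le_anti; rewrite hle mulr_ge0 // ltW.
  move/eqP; rewrite mulf_eq0 (gt_eqF h2) orbF => /eqP ->.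
  by rewrite mul0r.
have := f (b / A i i).
rewrite rmorphM /= fmorphV /= (realC_ge0 b0) (realC_ge0 d0i) => /(_ erefl).
have -> : b / A i i * (b / A i i) * A i i - 2 * (b / A i i) * b + b * A j j
   = (b / A i i) * (A i i * A j j - b).
  by field; rewrite gt_eqF.
move: b0; rewrite le_eqVlt => /orP [/eqP <- | bpos h].
  by move=> _; rewrite mulr_ge0.
by move: h; rewrite pmulr_rge0 ?divr_gt0 // subr_ge0.
Qed.

Lemma trAA_le n (A : 'M[algC]_n) : psd A -> \tr (A *m A) <= \tr A ^+ 2.
Proof.
move=> hpsd; have hH : hermE A by case: hpsd => /adjmx_herm.
rewrite trM expr2 /mxtrace big_distrl /=; apply: ler_sum => i _.
rewrite big_distrr /=; apply: ler_sum => j _.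
by rewrite [A j i]hH psd_minor.
Qed.

Lemma natC_real (k : nat) : (k%:R : algC)^* = k%:R.
Proof. exact: conjC_nat. Qed.

Lemma nat_facts n : (2 <= n)%N ->
  [/\ (n%:R : algC) != 0, (n%:R : algC) ^+ 2 - 1 != 0, (n%:R : algC) + 1 != 0,
      0 < (n%:R : algC) & 0 < (n%:R : algC) ^+ 2 - 1].
Proof.
move=> hn.
have e : (n%:R : algC) ^+ 2 - 1 = (n ^ 2 - 1)%:R.
  by rewrite natrB ?natrX // expn_gt0; case: n hn.
have p2 : (0 < n ^ 2 - 1)%N.
  by rewrite subn_gt0 -mulnn (leq_trans _ (leq_mul hn hn)).
have p1 : (0 < (n%:R : algC)) by rewrite ltr0n (leq_trans _ hn).
split.
- by rewrite gt_eqF.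
- by rewrite e gt_eqF // ltr0n.
- by rewrite gt_eqF // ltr_wpDr.
- by [].
- by rewrite e ltr0n.
Qed.

Lemma trP_sic n a (P : 'I_(n ^ 2) -> 'M[algC]_n) : (2 <= n)%N ->
  gen_SIC_POVM a P -> forall al, \tr (P al) = n%:R^-1.
Proof.
move=> hn [_ [_ [_ [hsum [hdiag hoff]]]]] al.
have [hN0 hN2 _ _ _] := nat_facts hn.
have : \tr (P al *m \sum_be P be) = \tr (P al) by rewrite hsum mulmx1.
rewrite mulmx_sumr raddf_sum /= (bigD1 al) //= hdiag.
rewrite (eq_bigr (fun _ => (1 - n%:R * a) / (n%:R * (n%:R ^+ 2 - 1)))); last first.
  by move=> be; rewrite eq_sym => /hoff.
rewrite sumr_const cardC1 card_ord -subn1 -[_ *+ (n ^ 2 - 1)]mulr_natl natrB ?natrX; last first.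
  by rewrite expn_gt0 (leq_trans _ hn).
move=> <-; field.
by rewrite hN0 hN2.
Qed.

Lemma herm_psd n (A : 'M[algC]_n) : psd A -> hermE A.
Proof. by case=> /adjmx_herm. Qed.

Lemma hermB n (A B : 'M[algC]_n) : hermE A -> hermE B -> hermE (A - B).
Proof. by move=> hA hB i j; rewrite !mxE rmorphB /= -hA -hB. Qed.

Lemma hermZ n (c : algC) (A : 'M[algC]_n) : c^* = c -> hermE A -> hermE (c *: A).
Proof. by move=> hc hA i j; rewrite !mxE rmorphM /= hc -hA. Qed.

Lemma herm1 n : hermE (1%:M : 'M[algC]_n).
Proof. by move=> i j; rewrite !mxE conjC_nat eq_sym. Qed.

Lemma herm_sum n I (r : seq I) (F : I -> 'M[algC]_n) :
  (forall i, hermE (F i)) -> hermE (\sum_(i <- r) F i).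
Proof.
move=> h i j; rewrite !summxE rmorph_sum; apply: eq_bigr => k _; exact: h.
Qed.

Lemma invC_real (x : algC) : x^* = x -> (x^-1)^* = x^-1.
Proof. by move=> h; rewrite fmorphV /= h. Qed.

Lemma sic_bound n a (P : 'I_(n ^ 2) -> 'M[algC]_n) (A : 'M[algC]_n) :
  (2 <= n)%N -> gen_SIC_POVM a P -> density A ->
  \sum_al \tr (P al *m A) * \tr (P al *m A)
    <= (a * n%:R ^+ 2 + 1) / (n%:R * (n%:R + 1)).
Proof.
move=> hn hP [hApsd htrA].
have trP := trP_sic hn hP.
case: hP => [ha3 [ha2 [hPpsd [hsum [hdiag hoff]]]]].
have [hN0 hN2 hN1 Npos N2pos] := nat_facts hn.
set N := (n%:R : algC) in hN0 hN2 hN1 Npos N2pos trP hoff ha3 ha2 *.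
have NR : N^* = N by rewrite conjC_nat.
set c := (1 - N * a) / (N * (N ^+ 2 - 1)) in hoff.
set k := a - c.
have hPH al : hermE (P al) by apply: herm_psd.
have hAH : hermE A by apply: herm_psd.
set A0 := A - N^-1 *: 1%:M.
have hA0 : hermE A0 by apply: hermB => //; apply: hermZ; [exact: invC_real|exact: herm1].
set z := fun al => \tr (P al *m A0).
have zR al : (z al)^* = z al by apply: tr_mul_conj.
have zE al : \tr (P al *m A) = z al + N^-1 * N^-1.
  rewrite /z /A0 mulmxBr raddfB /= -scalemxAr mulmx1 mxtraceZ trP; ring.
have sumz : \sum_al z al = 0.
  rewrite /z -raddf_sum -mulmx_suml hsum mul1mx /A0 raddfB /= mxtraceZ mxtrace1.
  by rewrite htrA -/N mulVf // subrr.
set T := \sum_al z al * z al.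
set M := \sum_al z al *: P al.
have hM : hermE M by apply: herm_sum => al; apply: hermZ.
have trMA0 : \tr (M *m A0) = T.
  rewrite /M mulmx_suml raddf_sum /=; apply: eq_bigr => al _.
  by rewrite -scalemxAl mxtraceZ.
have trMM : \tr (M *m M) = k * T.
  rewrite {1}/M mulmx_suml raddf_sum /= /T big_distrr; apply: eq_bigr => al _ /=.
  rewrite -scalemxAl mxtraceZ /M mulmx_sumr raddf_sum /= (bigD1 al) //=.
  rewrite -scalemxAr mxtraceZ hdiag.
  rewrite (eq_bigr (fun be => z be * c)); last first.
    by move=> be hbe; rewrite -scalemxAr mxtraceZ hoff // eq_sym.
  rewrite -big_distrl /=.
  have : \sum_(be | be != al) z be = - z al.
    by have := sumz; rewrite (bigD1 al) //= => /eqP; rewrite addrC addr_eq0 => /eqP.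
  move=> ->; rewrite /k; ring.
have kpos : 0 < k.
  have -> : k = (a * N ^+ 3 - 1) / (N * (N ^+ 2 - 1)).
    by rewrite /k /c; field; rewrite hN0 hN2.
  apply: divr_gt0; last by rewrite mulr_gt0.
  rewrite -(ltr_pM2r (exprn_gt0 3 Npos)) mulVf ?expf_neq0 // in ha3.
  by rewrite subr_gt0.
have hk0 : k != 0 by rewrite gt_eqF.
have kR : k^* = k by apply: realC_ge0; apply: ltW.
set H := k^-1 *: M - A0.
have hH : hermE H by apply: hermB => //; apply: hermZ => //; apply: invC_real.
have := tr_sq_ge0 hH.
have trA0 : \tr (A0 *m A0) = \tr (A *m A) - N^-1.
  rewrite /A0 mulmxBl !mulmxBr -!scalemxAr -!scalemxAl !mulmx1 !mul1mx scalerA.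
  rewrite !raddfB /= !mxtraceZ mxtrace1 htrA -/N; field.
  by rewrite hN0.
have -> : \tr (H *m H) = k^-1 * k^-1 * \tr (M *m M) - k^-1 * \tr (M *m A0)
   - k^-1 * \tr (A0 *m M) + \tr (A0 *m A0).
  rewrite /H mulmxBl !mulmxBr -!scalemxAr -!scalemxAl scalerA.
  rewrite !raddfB /= !mxtraceZ; ring.
rewrite [\tr (A0 *m M)]mxtrace_mulC trMA0 trMM trA0 => hpos.
have hAA : \tr (A *m A) <= 1 by rewrite -(expr1n _ 2) -htrA trAA_le.
have -> : \sum_al \tr (P al *m A) * \tr (P al *m A)
   = T + 2 * N^-1 * N^-1 * \sum_al z al + (n ^ 2)%:R * (N^-1 * N^-1 * (N^-1 * N^-1)).
  rewrite (eq_bigr (fun al => z al * z al + 2 * N^-1 * N^-1 * z al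
      + N^-1 * N^-1 * (N^-1 * N^-1))); last by move=> al _; rewrite zE; ring.
  by rewrite !big_split /= -big_distrr /= sumr_const card_ord -[_ *+ (n ^ 2)]mulr_natl.
rewrite sumz natrX -/N -subr_ge0.
have -> : (a * N ^+ 2 + 1) / (N * (N + 1)) -
    (T + 2 * N^-1 * N^-1 * 0 + N ^+ 2 * (N^-1 * N^-1 * (N^-1 * N^-1)))
  = k * (k^-1 * k^-1 * (k * T) - k^-1 * T - k^-1 * T + (\tr (A *m A) - N^-1))
    + k * (1 - \tr (A *m A)).
  rewrite /k /c; field.
  have -> : a * (N * (N ^+ 2 - 1)) - (1 - N * a) = k * (N * (N ^+ 2 - 1)).
    by rewrite /k /c; field; rewrite hN0 hN2.
  by rewrite hN0 hN1 hN2 !mulf_neq0.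
have k0 : 0 <= k by apply: ltW.
by apply: addr_ge0; apply: mulr_ge0 => //; rewrite subr_ge0.
Qed.

Lemma cs_bound (J : finType) (x y : J -> algC) (B1 B2 : algC) :
  (forall j, (x j)^* = x j) -> (forall j, (y j)^* = y j) ->
  0 < B1 -> 0 < B2 ->
  \sum_j x j * x j <= B1 -> \sum_j y j * y j <= B2 ->
  \sum_j x j * y j <= sqrtC B1 * sqrtC B2.
Proof.
move=> xR yR b1 b2 hX hY.
set s1 := sqrtC B1; set s2 := sqrtC B2.
have s1p : 0 < s1 by rewrite sqrtC_gt0.
have s2p : 0 < s2 by rewrite sqrtC_gt0.
have s1R : s1^* = s1 by apply: realC_ge0; apply: ltW.
have s2R : s2^* = s2 by apply: realC_ge0; apply: ltW.
have e1 : s1 ^+ 2 = B1 by rewrite sqrtCK.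
have e2 : s2 ^+ 2 = B2 by rewrite sqrtCK.
have h0 : 0 <= \sum_j (s2 * x j - s1 * y j) * (s2 * x j - s1 * y j).
  apply: sumr_ge0 => j _; apply: real_sq_ge0.
  by rewrite rmorphB !rmorphM /= s1R s2R xR yR.
have E : \sum_j (s2 * x j - s1 * y j) * (s2 * x j - s1 * y j)
   = s2 ^+ 2 * \sum_j x j * x j - 2 * s1 * s2 * \sum_j x j * y j
     + s1 ^+ 2 * \sum_j y j * y j.
  rewrite !big_distrr -sumrB -!big_split /=; apply: eq_bigr => j _; ring.
rewrite E in h0.
rewrite -subr_ge0 -(pmulr_rge0 _ (mulr_gt0 (mulr_gt0 (ltr0n _ 2) s1p) s2p)).
have -> : 2%:R * s1 * s2 * (s1 * s2 - \sum_j x j * y j) =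
  (s2 ^+ 2 * \sum_j x j * x j - 2 * s1 * s2 * \sum_j x j * y j
     + s1 ^+ 2 * \sum_j y j * y j)
  + s2 ^+ 2 * (s1 ^+ 2 - \sum_j x j * x j) + s1 ^+ 2 * (s2 ^+ 2 - \sum_j y j * y j).
  ring.
rewrite e1 e2 in h0 *.
apply: addr_ge0; first apply: addr_ge0 => //.
  by apply: mulr_ge0; [apply: ltW | rewrite subr_ge0].
by apply: mulr_ge0; [apply: ltW | rewrite subr_ge0].
Qed.

Lemma sum_inj_le (I J : finType) (f : I -> J) (F : J -> algC) :
  injective f -> (forall j, 0 <= F j) -> \sum_i F (f i) <= \sum_j F j.
Proof.
move=> finj F0.
have -> : \sum_i F (f i) = \sum_(j in [set f x | x in predT]) F j.
  by rewrite (big_imset _ (in2W finj)) /=.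
rewrite [X in _ <= X](bigID (mem [set f x | x in predT])) /=.
by rewrite lerDl sumr_ge0.
Qed.

Lemma Bpos n a (P : 'I_(n ^ 2) -> 'M[algC]_n) : (2 <= n)%N ->
  gen_SIC_POVM a P -> 0 < (a * n%:R ^+ 2 + 1) / (n%:R * (n%:R + 1)).
Proof.
move=> hn [ha _]; have [_ _ _ Np _] := nat_facts hn.
have a0 : 0 < a by apply: lt_trans ha; rewrite invr_gt0 exprn_gt0.
apply: divr_gt0; first by rewrite addr_gt0 // mulr_gt0 // exprn_gt0.
by rewrite mulr_gt0 // addr_gt0.
Qed.

Theorem theorem2 (d1 d2 : nat) (h1 : (2 <= d1)%N) (h2 : (2 <= d2)%N)
  (rho : 'M[algC]_(d1 * d2)) (hrho : density rho)
  (a1 a2 : algC) (P : 'I_(d1 ^ 2) -> 'M[algC]_d1) (Q : 'I_(d2 ^ 2) -> 'M[algC]_d2)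
  (hP : gen_SIC_POVM a1 P) (hQ : gen_SIC_POVM a2 Q) :
  separable rho ->
  forall (sigma : 'I_(minn (d1 ^ 2) (d2 ^ 2)) -> 'I_(d1 ^ 2))
         (tau : 'I_(minn (d1 ^ 2) (d2 ^ 2)) -> 'I_(d2 ^ 2)),
    injective sigma -> injective tau ->
    \sum_(j < minn (d1 ^ 2) (d2 ^ 2)) \tr (kron (P (sigma j)) (Q (tau j)) *m rho)
      <= sqrtC ((a1 * d1%:R ^+ 2 + 1) / (d1%:R * (d1%:R + 1)))
         * sqrtC ((a2 * d2%:R ^+ 2 + 1) / (d2%:R * (d2%:R + 1))).
Proof.
move=> [N [p [A [B [hp [hpsum [hA [hB ->]]]]]]]] sigma tau hs ht.
set R := _ * _.
have hPH al : hermE (P al) by case: hP => _ [_ [/(_ al) /herm_psd]].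
have hQH al : hermE (Q al) by case: hQ => _ [_ [/(_ al) /herm_psd]].
have hAH i : hermE (A i) by case: (hA i) => /herm_psd.
have hBH i : hermE (B i) by case: (hB i) => /herm_psd.
have -> : \sum_(j < minn (d1 ^ 2) (d2 ^ 2))
    \tr (kron (P (sigma j)) (Q (tau j)) *m \sum_(i < N) p i *: kron (A i) (B i))
    = \sum_(i < N) p i * \sum_j
    \tr (P (sigma j) *m A i) * \tr (Q (tau j) *m B i).
  apply: esym; rewrite (eq_bigr _ (fun i _ => big_distrr _ _ _)) /= exchange_big /=.
  apply: eq_bigr => j _.
  rewrite mulmx_sumr raddf_sum /=; apply: eq_bigr => i _.
  by rewrite -scalemxAr mxtraceZ tr_kron mulrA.
apply: le_trans (_ : \sum_(i < N) p i * R <= _).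
  apply: ler_sum => i _; apply: ler_wpM2l => //.
  apply: cs_bound.
  - by move=> j; apply: tr_mul_conj.
  - by move=> j; apply: tr_mul_conj.
  - exact: Bpos hP.
  - exact: Bpos hQ.
  - apply: le_trans (sic_bound h1 hP (hA i)).
    apply: (@sum_inj_le _ _ sigma (fun al => \tr (P al *m A i) * \tr (P al *m A i))) => //.
    by move=> al; apply: real_sq_ge0; apply: tr_mul_conj.
  - apply: le_trans (sic_bound h2 hQ (hB i)).
    apply: (@sum_inj_le _ _ tau (fun al => \tr (Q al *m B i) * \tr (Q al *m B i))) => //.
    by move=> al; apply: real_sq_ge0; apply: tr_mul_conj.
by rewrite -big_distrl /= hpsum mul1r.
Qed.
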